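(* Let $F$ be a preordered semifield of characteristic zero satisfying $1 \geq 0$, and suppose that $u \in F$ is polynomially universal. Then for all nonzero $x, y \in F$, the following are equivalent: (1) $f(x) \geq f(y)$ for every monotone semiring homomorphism $f : F \to \mathbb{R}_+$. (2) For every rational $\varepsilon > 0$, there is $m \in \mathbb{N}$ such that $x + \sum_{j=0}^m \varepsilon^{j+1} u^j \geq y$. (3) For every $r \in \mathbb{R}_+$ and rational $\varepsilon > 0$, there is a polynomial $p \in \mathbb{Q}_+[X]$ such that $p(r) \leq \varepsilon$ and $x + p(u) \geq y$. (4) For every $r \in \mathbb{R}_+$ and rational $\varepsilon > 0$, there is a polynomial $p \in \mathbb{Q}_+[X]$ such that $p(r) \leq 1 + \varepsilon$ and $p(u)\, x \geq y$.
   Context: A semiring is a set with two commutative monoid structures, addition (neutral element $0$) and multiplication (neutral element $1$), with multiplication distributing over addition; a semiring homomorphism preserves $+$, $\cdot$, $0$, $1$. A semifield is a semiring in which every nonzero element has a multiplicative inverse. It has characteristic zero if the unique homomorphism $\mathbb{N} \to F$ is injective; a semifield of characteristic zero is then a $\mathbb{Q}_+$-algebra, which gives meaning to $\varepsilon^{j+1} u^j$ and $p(u)$ for rational coefficients. A preordered semifield is a semifield with a preorder $\geq$ such that $x \geq y$ implies $x+z \geq y+z$ and $xz \geq yz$ for all $z$. A semiring homomorphism is monotone if it preserves the preorder ($\mathbb{R}_+$ with its usual order). An element $u \geq 1$ is polynomially universal if for every nonzero $x \in F$ there is $p \in \mathbb{N}[X]$ with $p(u)\,x \geq 1$ and $p(u)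 \geq x$. *)

(* Defs.v *)
From HB Require Import structures.
From mathcomp Require Import all_boot all_order all_algebra.
From mathcomp Require Import reals.
Set Implicit Arguments. Unset Strict Implicit. Unset Printing Implicit Defensive.
Import Order.TTheory GRing.Theory Num.Theory.
Local Open Scope ring_scope.

(* A preordered semifield: a commutative (nontrivial) semiring F, a
   multiplicative inverse function [inv] for nonzero elements (the semifield
   axiom), and a preorder [ge] (ge x y reads "x >= y") compatible with + and *. *)
Definition preordered_semifield (F : comNzSemiRingType) (inv : F -> F)
    (ge : F -> F -> Prop) : Prop :=
  [/\ (forall x : F, x != 0 -> x * inv x = 1),
      (forall x, ge x x),
      (forall x y z, ge x y -> ge y z -> ge x z),
      (forall x y z, ge x y -> ge (x + z) (y + z)) &
      (forall x y z, ge x y -> ge (x * z) (y * z))].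

Definition char_zero (F : comNzSemiRingType) : Prop :=
  injective (fun n : nat => (n%:R : F)).

(* Q_+-algebra structure: image of a nonnegative rational in F *)
Definition ratF (F : comNzSemiRingType) (inv : F -> F) (q : rat) : F :=
  (absz (numq q))%:R * inv ((absz (denq q))%:R).

Definition evalN (F : comNzSemiRingType) (p : {poly nat}) (u : F) : F :=
  (map_poly (fun n : nat => (n%:R : F)) p).[u].

Definition nonneg_poly (p : {poly rat}) : Prop := forall i, 0 <= p`_i.

Definition evalQ (F : comNzSemiRingType) (inv : F -> F) (p : {poly rat}) (u : F) : F :=
  (map_poly (ratF inv) p).[u].

Definition evalR (R : realType) (p : {poly rat}) (r : R) : R :=
  (map_poly (fun q : rat => (ratr q : R)) p).[r].

Definition poly_universal (F : comNzSemiRingType) (ge : F -> F -> Prop) (u : F) : Prop :=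
  ge u 1 /\
  forall x : F, x != 0 ->
    exists p : {poly nat}, ge (evalN p u * x) 1 /\ ge (evalN p u) x.

Definition monotone_hom (F : comNzSemiRingType) (ge : F -> F -> Prop)
    (R : realType) (f : F -> R) : Prop :=
  (forall x, 0 <= f x) /\
  [/\ f 0 = 0, f 1 = 1,
      (forall x y, f (x + y) = f x + f y),
      (forall x y, f (x * y) = f x * f y) &
      (forall x y, ge x y -> f y <= f x)].

(* Main.v *)
Require Import Defs.
From HB Require Import structures.
From mathcomp Require Import all_boot all_order all_algebra.
From mathcomp Require Import reals ring lra classical_sets.
From Stdlib Require Import Classical.
Import Order.TTheory GRing.Theory Num.Theory.
Local Open Scope ring_scope.
Set Implicit Arguments. Unset Strict Implicit. Unset Printing Implicit Defensive.

Lemma fracD (K : fieldType) (a b c d : K) : b != 0 -> d != 0 ->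
  a / b + c / d = (a * d + c * b) / (b * d).
Proof. by move=> b0 d0; field; apply/andP. Qed.

Lemma fracM (K : fieldType) (a b c d : K) : b != 0 -> d != 0 ->
  a / b * (c / d) = (a * c) / (b * d).
Proof. by move=> b0 d0; field; apply/andP. Qed.

Section RatF.
Variables (F : comNzSemiRingType) (inv : F -> F).
Hypothesis invP : forall x : F, x != 0 -> x * inv x = 1.
Hypothesis ch0 : char_zero F.

Lemma natF_neq0 n : (0 < n)%N -> (n%:R : F) != 0.
Proof. move=> n0; apply/eqP => /(@ch0 n 0) e; by rewrite e in n0. Qed.

Lemma inv_uniq x z : x * z = 1 -> inv x = z.
Proof.
move=> xz; have x0 : x != 0.
  by apply/eqP => x0; move: xz; rewrite x0 mul0r => /eqP; rewrite eq_sym oner_eq0.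
by rewrite -[inv x]mulr1 -xz mulrA (mulrC (inv x)) invP // mul1r.
Qed.

Lemma inv1 : inv 1 = 1.
Proof. by apply: inv_uniq; rewrite mulr1. Qed.

Lemma invM x y : x != 0 -> y != 0 -> inv (x * y) = inv x * inv y.
Proof. by move=> x0 y0; apply: inv_uniq; rewrite mulrACA !invP // mulr1. Qed.

Lemma cancelF x y z : x != 0 -> y * x * (inv x * z) = y * z.
Proof. by move=> x0; rewrite -mulrA (mulrA x) invP // mul1r. Qed.

Lemma rat_nat_frac q : 0 <= q -> exists a b : nat,
  [/\ (0 < b)%N, q = a%:R / b%:R & ratF inv q = a%:R * inv b%:R].
Proof.
move=> q0; exists (absz (numq q)), (absz (denq q)); split => //.
- by rewrite absz_gt0 denq_neq0.
- rewrite !natr_absz !ger0_norm ?numq_ge0 ?denq_ge0 //.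
  by rewrite divq_num_den.
Qed.

Lemma ratF_frac q a b : (0 < b)%N -> q = a%:R / b%:R ->
  ratF inv q = a%:R * inv b%:R.
Proof.
move=> b0 qe.
have q0 : 0 <= q by rewrite qe divr_ge0 // ler0n.
have [a' [b' [b'0 qe' ->]]] := rat_nat_frac q0.
have : (a * b' == a' * b)%N.
  rewrite -(@eqr_nat rat) !natrM -eqr_div ?pnatr_eq0 -?lt0n //.
  by rewrite -qe -qe'.
move=> /eqP E.
have EF : (a%:R * b'%:R : F) = a'%:R * b%:R by rewrite -!natrM E.
symmetry; transitivity ((a%:R * b'%:R) * (inv b%:R * inv b'%:R) : F); last first.
  by rewrite EF (mulrC (inv b%:R)) mulrACA invP ?natF_neq0 // mulr1.
by rewrite [in RHS]mulrACA invP ?natF_neq0 // mulr1.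
Qed.

Lemma ratF0 : ratF inv 0 = 0.
Proof. by rewrite (@ratF_frac 0 0 1) // ?mul0r // divr1. Qed.

Lemma ratF_nat n : ratF inv n%:R = n%:R.
Proof. by rewrite (@ratF_frac _ n 1) // ?divr1 // inv1 mulr1. Qed.

Lemma ratF1 : ratF inv 1 = 1.
Proof. by have := ratF_nat 1. Qed.

Lemma ratFD q r : 0 <= q -> 0 <= r -> ratF inv (q + r) = ratF inv q + ratF inv r.
Proof.
move=> /rat_nat_frac [a [b [b0 -> ->]]] /rat_nat_frac [c [d [d0 -> ->]]].
rewrite (@ratF_frac _ (a * d + c * b) (b * d)) ?muln_gt0 ?b0 //.
  rewrite natrM invM ?natF_neq0 // natrD !natrM.
  rewrite mulrDl; congr (_ + _); last by rewrite cancelF ?natF_neq0.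
  by rewrite (mulrC (inv b%:R)) cancelF ?natF_neq0.
rewrite natrD !natrM.
have b0' : (b%:R : rat) != 0 by rewrite pnatr_eq0 -lt0n.
have d0' : (d%:R : rat) != 0 by rewrite pnatr_eq0 -lt0n.
exact: fracD.
Qed.

Lemma ratFM q r : 0 <= q -> 0 <= r -> ratF inv (q * r) = ratF inv q * ratF inv r.
Proof.
move=> /rat_nat_frac [a [b [b0 -> ->]]] /rat_nat_frac [c [d [d0 -> ->]]].
rewrite (@ratF_frac _ (a * c) (b * d)) ?muln_gt0 ?b0 //.
  by rewrite !natrM invM ?natF_neq0 //; ring.
rewrite !natrM.
have b0' : (b%:R : rat) != 0 by rewrite pnatr_eq0 -lt0n.
have d0' : (d%:R : rat) != 0 by rewrite pnatr_eq0 -lt0n.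
exact: fracM.
Qed.

Lemma ratF_neq0 q : 0 < q -> ratF inv q != 0.
Proof.
move=> q0; apply/eqP => e.
have : ratF inv (q * q^-1) = 0.
  by rewrite ratFM ?e ?mul0r // ?invr_ge0 ltW.
by rewrite mulfV ?gt_eqF // ratF1 => /eqP; rewrite oner_eq0.
Qed.

Lemma ratFX q n : 0 <= q -> ratF inv (q ^+ n) = ratF inv q ^+ n.
Proof.
move=> q0; elim: n => [|n IH]; first by rewrite !expr0 ratF1.
by rewrite !exprS ratFM ?exprn_ge0 // IH.
Qed.

End RatF.

Definition compat (F : comNzSemiRingType) (R : F -> F -> Prop) :=
  [/\ (forall x, R x x), (forall x y z, R x y -> R y z -> R x z),
      (forall x y z, R x y -> R (x + z) (y + z)) &
      (forall x y z, R x y -> R (x * z) (y * z))].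

Section Compat.
Variables (F : comNzSemiRingType) (R : F -> F -> Prop).
Hypothesis cR : compat R.

Lemma Rrefl x : R x x. Proof. by case: cR. Qed.
Lemma Rtrans x y z : R x y -> R y z -> R x z. Proof. by case: cR => _ h _ _; apply: h. Qed.
Lemma RaddR x y z : R x y -> R (x + z) (y + z). Proof. by case: cR => _ _ h _; apply: h. Qed.
Lemma RaddL x y z : R x y -> R (z + x) (z + y).
Proof. by rewrite ![z + _]addrC; apply: RaddR. Qed.
Lemma RmulR x y z : R x y -> R (x * z) (y * z). Proof. by case: cR => _ _ _ h; apply: h. Qed.
Lemma RmulL x y z : R x y -> R (z * x) (z * y).
Proof. by rewrite ![z * _]mulrC; apply: RmulR. Qed.
Lemma Radd2 a b c d : R a b -> R c d -> R (a + c) (b + d).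
Proof. by move=> h1 h2; apply: Rtrans (RaddR _ h1) (RaddL _ h2). Qed.
Lemma Rmul2 a b c d : R a b -> R c d -> R (a * c) (b * d).
Proof. by move=> h1 h2; apply: Rtrans (RmulR _ h1) (RmulL _ h2). Qed.
Lemma Rsum n (f g : 'I_n -> F) : (forall i, R (f i) (g i)) ->
  R (\sum_(i < n) f i) (\sum_(i < n) g i).
Proof.
move=> h; apply: (big_ind2 R) => //; first exact: Rrefl.
by move=> *; apply: Radd2.
Qed.

Hypothesis R10 : R 1 0.
Lemma Rge0 a : R a 0.
Proof. by have := RmulL a R10; rewrite mulr1 mulr0. Qed.
Lemma Raddr a b : R (a + b) a.
Proof. by have := RaddL a (Rge0 b); rewrite addr0. Qed.
Lemma Raddl a b : R (b + a) a.
Proof. by rewrite addrC; apply: Raddr. Qed.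
End Compat.
Arguments RaddR {F R} cR {x y} z.
Arguments RaddL {F R} cR {x y} z.
Arguments RmulR {F R} cR {x y} z.
Arguments RmulL {F R} cR {x y} z.
Arguments Radd2 {F R} cR {a b c d}.
Arguments Rmul2 {F R} cR {a b c d}.

Lemma compat_ge (F : comNzSemiRingType) (inv : F -> F) (ge : F -> F -> Prop) :
  preordered_semifield inv ge -> compat ge.
Proof. by case=> _ h1 h2 h3 h4; split. Qed.

Section Hom.
Variables (F : comNzSemiRingType) (inv : F -> F) (ge : F -> F -> Prop).
Hypothesis invP : forall x : F, x != 0 -> x * inv x = 1.
Hypothesis ch0 : char_zero F.
Variables (R : realType) (f : F -> R).
Hypothesis hf : monotone_hom ge f.

Lemma f0 : f 0 = 0. Proof. by case: hf => _ []. Qed.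
Lemma f1 : f 1 = 1. Proof. by case: hf => _ []. Qed.
Lemma fD a b : f (a + b) = f a + f b. Proof. by case: hf => _ [] _ _ h _ _; apply: h. Qed.
Lemma fM a b : f (a * b) = f a * f b. Proof. by case: hf => _ [] _ _ _ h _; apply: h. Qed.
Lemma fge0 a : 0 <= f a. Proof. by case: hf. Qed.
Lemma fmono a b : ge a b -> f b <= f a. Proof. by case: hf => _ [] _ _ _ _ h; apply: h. Qed.

Lemma fsum n (g : 'I_n -> F) : f (\sum_(i < n) g i) = \sum_(i < n) f (g i).
Proof.
by apply: (big_ind2 (fun a b => f a = b)) => [|a b c d <- <-|i _]; rewrite ?f0 ?fD.
Qed.

Lemma fX a n : f (a ^+ n) = f a ^+ n.
Proof. by elim: n => [|n IH]; rewrite ?expr0 ?f1 // !exprS fM IH. Qed.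

Lemma fnat n : f n%:R = n%:R.
Proof. by elim: n => [|n IH]; rewrite ?f0 // -addn1 !natrD fD IH f1. Qed.

Lemma finv a : a != 0 -> f (inv a) = (f a)^-1.
Proof.
move=> a0; have h : f a * f (inv a) = 1 by rewrite -fM invP // f1.
have fa0 : f a != 0 by apply/eqP => e; move: h; rewrite e mul0r => /eqP; rewrite eq_sym oner_eq0.
by rewrite -[f (inv a)]mul1r -(mulVf fa0) -mulrA h mulr1.
Qed.

Lemma fratF q : 0 <= q -> f (ratF inv q) = ratr q.
Proof.
move=> q0; have [a [b [b0 qe ->]]] := rat_nat_frac inv q0.
rewrite fM finv ?natF_neq0 // !fnat qe fmorph_div /= !ratr_nat.
by [].
Qed.

Lemma fevalQ p a : nonneg_poly p -> f (evalQ inv p a) = evalR p (f a).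
Proof.
move=> pn; rewrite /evalQ /evalR.
rewrite (@horner_coef_wide _ (size p)); last exact: size_poly.
rewrite (@horner_coef_wide _ (size p) (map_poly _ p)); last exact: size_poly.
rewrite fsum; apply: eq_bigr => i _.
rewrite fM fX !coef_map_id0 ?ratF0 ?rmorph0 // fratF //.
Qed.
End Hom.

Definition cN (p : {poly nat}) (i : nat) : nat := nth 0%N p i.

Section Hard.
Variables (F : comNzSemiRingType) (inv : F -> F) (ge : F -> F -> Prop) (u : F).
Hypotheses (psf : preordered_semifield inv ge) (ch0 : char_zero F) (ge10 : ge 1 0)
  (pu : poly_universal ge u).
Variables (x y : F) (eps : rat).
Hypothesis eps0 : 0 < eps.

Let invP : forall a : F, a != 0 -> a * inv a = 1.
Proof. by case: psf. Qed.
Let cge : compat ge := compat_ge psf.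
Let u1 : ge u 1. Proof. by case: pu. Qed.

Definition T (j : nat) := ratF inv (eps ^+ j.+1) * u ^+ j.
Definition S m := \sum_(j < m.+1) T j.

Lemma uX1 k : ge (u ^+ k) 1.
Proof.
elim: k => [|k IH]; first by rewrite expr0; exact: (Rrefl cge).
rewrite exprSr; apply: (Rtrans cge (y := u ^+ k * 1)); last by rewrite mulr1.
exact: (RmulL cge _ u1).
Qed.

Lemma uXmono c j k : (j <= k)%N -> ge (c * u ^+ k) (c * u ^+ j).
Proof.
move=> jk; rewrite -(subnKC jk) exprD mulrA.
rewrite -[X in ge _ X]mulr1; exact: (RmulL cge _ (uX1 _)).
Qed.

Lemma ratF_mono q r : 0 <= q -> q <= r -> ge (ratF inv r) (ratF inv q).
Proof.
move=> q0 qr; rewrite -(subrKC q r) ratFD ?subr_ge0 //.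
exact: Raddr.
Qed.

Lemma S_split m k : S (m + k) = S m + \sum_(i < k) T (m.+1 + i).
Proof. by rewrite /S (@big_split_ord _ _ _ m.+1 k). Qed.

Lemma S_ge_T m : ge (S m) (T m).
Proof. rewrite /S big_ord_recr /=; exact: Raddl. Qed.

Lemma S_ge_eps m : ge (S m) (ratF inv eps).
Proof.
rewrite /S big_ord_recl /= /T expr0 mulr1 expr1; exact: Raddr.
Qed.

Lemma S_mono m k : ge (S (m + k)) (S m).
Proof. rewrite S_split; exact: Raddr. Qed.

Lemma S_mono' m k : (m <= k)%N -> ge (S k) (S m).
Proof. by move=> mk; rewrite -(subnKC mk); apply: S_mono. Qed.

Lemma evalN_sum (p : {poly nat}) (a : F) :
  evalN p a = \sum_(i < size p) (cN p i)%:R * a ^+ i.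
Proof.
rewrite /evalN (@horner_coef_wide _ (size p)); last exact: size_poly.
by apply: eq_bigr => i _; rewrite coef_map_id0.
Qed.

Hypothesis bad : forall m, ~ ge (x + S m) y.

Lemma zsf (s t : F) : s + t = 0 -> s = 0.
Proof.
move=> st; case: (eqVneq s 0) => // s0; exfalso; apply (@bad 0%N).
have e : 1 + t * inv s = 0 by rewrite -(invP s0) -mulrDl st mul0r.
have h01 : ge 0 1.
  have := RaddR cge 1 (Rge0 cge ge10 (t * inv s)).
  by rewrite add0r addrC e.
have h0y : ge 0 y by have := RmulL cge y h01; rewrite mulr0 mulr1.
exact: (Rtrans cge (Rge0 cge ge10 _) h0y).
Qed.

Lemma y_neq0 : y != 0.
Proof. apply/eqP => y0; apply (@bad 0%N); rewrite y0; exact: Rge0. Qed.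

Lemma cancel_lem (R : F -> F -> Prop) : compat R -> (forall a b, ge a b -> R a b) ->
  forall M d, R (x + S M + d) (y + d) -> exists m, R (x + S m) y.
Proof.
move=> cR geR M d h.
have [p hp] : exists p : {poly nat}, ge (evalN p u) d.
  case: (eqVneq d 0) => [->|d0].
    by exists 0; rewrite /evalN map_poly0 horner0; exact: (Rrefl cge).
  by case: pu => _ /(_ d d0) [p [_ hp]]; exists p.
set a := x + S M in h.
have step : forall n, R (n%:R * a + d) (n%:R * y + d).
  elim=> [|n IH]; first by rewrite !mul0r !add0r; exact: (Rrefl cR).
  have e1 : n.+1%:R * a + d = a + (n%:R * a + d) by rewrite -natr1; ring.
  have e2 : a + (n%:R * y + d) = (a + d) + n%:R * y by ring.
  have e3 : (y + d) + n%:R * y = n.+1%:R * y + d by rewrite -natr1; ring.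
  rewrite e1 -e3; apply: (Rtrans cR (RaddL cR a IH)); rewrite e2.
  exact: (RaddR cR _ h).
set K := size p.
set C := (\sum_(i < K) cN p i)%N.
set e := Num.min eps 1.
have e0 : 0 < e by rewrite lt_min eps0 ltr01.
have e1 : e <= 1 by rewrite ge_min lexx orbT.
have e2 : e <= eps by rewrite ge_min lexx.
set dl := e ^+ (M.+1 + K).
have dl0 : 0 < dl by rewrite exprn_gt0.
set n := (Num.Def.archi_bound ((C%:R : rat) / dl)).+1.
have n0 : (0 < n)%N by [].
have n0' : (0 : rat) < n%:R by rewrite ltr0n.
have hn : (C%:R : rat) / dl < n%:R.
  apply: (lt_le_trans (archi_boundP _) _); first by rewrite divr_ge0 ?ler0n // ltW.
  by rewrite ler_nat.
have hcoef : forall i : 'I_K, (cN p i)%:R / n%:R <= eps ^+ (M.+1 + i).+1.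
  move=> i.
  have hi : (cN p i <= C)%N by rewrite /C (bigD1 i) //= leq_addr.
  apply: (@le_trans _ _ dl).
    rewrite ler_pdivrMr //; apply: (@le_trans _ _ (C%:R)); first by rewrite ler_nat.
    by move: hn; rewrite ltr_pdivrMr // mulrC => /ltW.
  apply: (@le_trans _ _ (e ^+ (M.+1 + i).+1)).
    by apply: ler_wiXn2l => //; [exact: ltW | rewrite -addnS leq_add2l].
  by apply: lerXn2r => //; rewrite ?nnegrE ltW.
have h2 : R (a + d * inv n%:R) y.
  have := RmulR cR (inv n%:R) (step n).
  have en : forall z, (n%:R * z + d) * inv n%:R = z + d * inv n%:R.
    by move=> z; rewrite mulrDl mulrAC invP ?natF_neq0 // mul1r.
  rewrite !en => h3; apply: (Rtrans cR h3); apply: geR; exact: (Raddr cge ge10).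
have h4 : ge (x + S (M + K)) (a + d * inv n%:R).
  rewrite S_split /a -addrA; apply: (RaddL cge _); apply: (RaddL cge _).
  apply: (Rtrans cge _ (RmulR cge (inv n%:R) hp)).
  rewrite evalN_sum mulr_suml; apply: (Rsum cge) => i.
  rewrite /T; apply: (Rtrans cge (y := ratF inv ((cN p i)%:R / n%:R) * u ^+ (M.+1 + i))).
    apply: (RmulR cge _) ; apply: ratF_mono => //.
    by rewrite divr_ge0 // ler0n.
  rewrite (ratF_frac invP ch0 (a:=cN p i) (b:=n)) // (mulrAC _ (u ^+ i)).
  by apply: uXmono; rewrite leq_addl.
by exists (M + K); apply: (Rtrans cR (geR _ _ h4) h2).
Qed.

Definition relU (A : set (F * F)) : F -> F -> Prop := fun a b => ge a b \/ A (a, b).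
Definition good (A : set (F * F)) :=
  compat (relU A) /\ forall m, ~ relU A (x + S m) y.

Lemma good_chain (Fm : set (set (F * F))) :
  (Fm `<=` good)%classic -> total_on Fm subset ->
  good (\bigcup_(X in Fm) X)%classic.
Proof.
move=> FmP tot.
set U := (\bigcup_(X in Fm) X)%classic.
have inU : forall a b, relU U a b -> ge a b \/ exists2 A, Fm A & relU A a b.
  by move=> a b [h|[A FA h]]; [left | right; exists A => //; right].
have liftU : forall A a b, Fm A -> relU A a b -> relU U a b.
  by move=> A a b FA [h|h]; [left | right; exists A].
have gA : forall A, Fm A -> compat (relU A) by move=> A FA; case: (FmP A FA).
split; first split.
- by move=> a; left; exact: (Rrefl cge).
- move=> a b c /inU [hab|[A FA hab]] /inU [hbc|[B FB hbc]].
  + by left; exact: (Rtrans cge hab hbc).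
  + apply: (liftU B) => //; apply: (Rtrans (gA B FB) _ hbc); by left.
  + apply: (liftU A) => //; apply: (Rtrans (gA A FA) hab); by left.
  + case: (tot A B FA FB) => [AB|BA].
    * apply: (liftU B) => //; apply: (Rtrans (gA B FB) _ hbc).
      by case: hab => [h|h]; [left | right; exact: AB].
    * apply: (liftU A) => //; apply: (Rtrans (gA A FA) hab).
      by case: hbc => [h|h]; [left | right; exact: BA].
- move=> a b c /inU [h|[A FA h]].
  + by left; exact: (RaddR cge c h).
  + by apply: (liftU A) => //; exact: (RaddR (gA A FA) c h).
- move=> a b c /inU [h|[A FA h]].
  + by left; exact: (RmulR cge c h).
  + by apply: (liftU A) => //; exact: (RmulR (gA A FA) c h).
- move=> m /inU [h|[A FA h]]; first exact: (bad h).
  by case: (FmP A FA) => _ /(_ m); apply.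
Qed.

Definition Gen (R : F -> F -> Prop) a b : F -> F -> Prop :=
  fun c d => exists w, R (c + w * b) (d + w * a).

Lemma Gen_compat R a b : compat R -> compat (Gen R a b).
Proof.
move=> cR; split.
- by move=> c; exists 0; rewrite !mul0r; exact: (Rrefl cR).
- move=> c e d [w1 h1] [w2 h2]; exists (w1 + w2).
  have k1 := RaddR cR (w2 * b) h1.
  have k2 := RaddR cR (w1 * a) h2.
  have E1 : c + (w1 + w2) * b = c + w1 * b + w2 * b by ring.
  have E2 : e + w1 * a + w2 * b = e + w2 * b + w1 * a by ring.
  have E3 : d + w2 * a + w1 * a = d + (w1 + w2) * a by ring.
  by rewrite E1 -E3; apply: (Rtrans cR k1); rewrite E2.
- move=> c d z [w h]; exists w.
  have k := RaddR cR z h.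
  have E1 : c + z + w * b = c + w * b + z by ring.
  have E2 : d + z + w * a = d + w * a + z by ring.
  by rewrite E1 E2.
- move=> c d z [w h]; exists (w * z).
  have k := RmulR cR z h.
  have E1 : c * z + w * z * b = (c + w * b) * z by ring.
  have E2 : d * z + w * z * a = (d + w * a) * z by ring.
  by rewrite E1 E2.
Qed.

Lemma Gen_incl R a b c d : R c d -> Gen R a b c d.
Proof. by move=> h; exists 0; rewrite !mul0r !addr0. Qed.

Lemma Gen_ab R a b : compat R -> Gen R a b a b.
Proof. by move=> cR; exists 1; rewrite !mul1r addrC; exact: (Rrefl cR). Qed.

Lemma compat_ext (R1 R2 : F -> F -> Prop) :
  (forall c d, R1 c d <-> R2 c d) -> compat R1 -> compat R2.
Proof.
move=> E [h1 h2 h3 h4]; split.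
- by move=> c; apply/E.
- by move=> a b c /E hab /E hbc; apply/E; exact: h2 hab hbc.
- by move=> a b c /E h; apply/E; exact: h3.
- by move=> a b c /E h; apply/E; exact: h4.
Qed.

Variable A0 : set (F * F).
Hypothesis gA0 : good A0.
Hypothesis maxA0 : forall B, (A0 `<` B)%classic -> ~ good B.

Let R0 := relU A0.
Let cR0 : compat R0. Proof. by case: gA0. Qed.
Let geR0 a b : ge a b -> R0 a b. Proof. by left. Qed.
Let badR0 m : ~ R0 (x + S m) y. Proof. by case: gA0 => _; apply. Qed.

Lemma key_gen a b : ~ R0 a b -> exists m w, R0 (x + S m + w * b) (y + w * a).
Proof.
move=> nab; set B : set (F * F) := fun cd => Gen R0 a b cd.1 cd.2.
have AB : (A0 `<` B)%classic.
  split; first by move=> [c d] h; rewrite /B /=; apply: Gen_incl; right.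
  move=> BA; apply: nab; right; apply: BA; rewrite /B /=; exact: Gen_ab.
have nG := maxA0 AB.
have relUB : forall c d, Gen R0 a b c d <-> relU B c d.
  move=> c d; split; first by move=> h; right.
  by case=> [h|h] //; apply: Gen_incl; left.
have cB : compat (relU B) by apply: (compat_ext relUB); exact: Gen_compat.
case: (classic (exists m, relU B (x + S m) y)) => [[m hm]|hn].
  by move/relUB: hm => [w hw]; exists m, w.
by exfalso; apply: nG; split => // m hm; apply: hn; exists m.
Qed.

Lemma R0_total a b : R0 a b \/ R0 b a.
Proof.
case: (classic (R0 a b)) => hab; first by left.
case: (classic (R0 b a)) => hba; first by right.
exfalso.
have [m1 [w1 h1]] := key_gen hab.
have [m2 [w2 h2]] := key_gen hba.
set M := maxn m1 m2; set X := x + S M.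
have lift : forall m w c, (m <= M)%N -> R0 (X + w * c) (x + S m + w * c).
  move=> m w c mM; apply: geR0; apply: (RaddR cge).
  exact: (RaddL cge x (S_mono' mM)).
have h1' := Rtrans cR0 (lift _ _ _ (leq_maxl m1 m2)) h1.
have h2' := Rtrans cR0 (lift _ _ _ (leq_maxr m1 m2)) h2.
case: (eqVneq w1 0) => [w10|w1n0].
  by apply: (@badR0 M); move: h1'; rewrite w10 !mul0r !addr0.
have W0 : w1 + w2 != 0.
  by apply/eqP => /zsf w10; move: w1n0; rewrite w10 eqxx.
set W := w1 + w2; set c := w1 * w2.
have k1 := RmulL cR0 w2 h1'.
have k2 := RmulL cR0 w1 h2'.
have s1 := RaddL cR0 (w1 * X) k1.
have s2 := RaddR cR0 (w2 * y) k2.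
have E1 : W * X + c * b = w1 * X + w2 * (X + w1 * b) by rewrite /W /c; ring.
have E2 : w1 * X + w2 * (y + w1 * a) = w1 * (X + w2 * a) + w2 * y by ring.
have E3 : w1 * (y + w2 * b) + w2 * y = W * y + c * b by rewrite /W /c; ring.
have k : R0 (W * X + c * b) (W * y + c * b).
  by rewrite E1 -E3; apply: (Rtrans cR0 s1); rewrite E2.
have kk := RmulR cR0 (inv W) k.
have eW : forall z, (W * z + c * b) * inv W = z + c * b * inv W.
  by move=> z; rewrite mulrDl mulrAC invP // mul1r.
rewrite !eW in kk.
have [m hm] := cancel_lem cR0 geR0 kk.
exact: (badR0 hm).
Qed.

Lemma evalN_bound (p : {poly nat}) :
  ge (((\sum_(i < size p) cN p i)%N)%:R * u ^+ size p) (evalN p u).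
Proof.
rewrite evalN_sum natr_sum mulr_suml; apply: (Rsum cge) => i.
by apply: uXmono; apply: ltnW.
Qed.

Lemma RX (R : F -> F -> Prop) a b n : compat R -> R a b -> R (a ^+ n) (b ^+ n).
Proof.
move=> cR h; elim: n => [|n IH]; first by rewrite !expr0; exact: (Rrefl cR).
by rewrite !exprS; exact: (Rmul2 cR h IH).
Qed.

Lemma u_bounded : exists N : nat, R0 N%:R u.
Proof.
case: (classic (exists N : nat, R0 N%:R u)) => // hn; exfalso.
have hu : forall N : nat, R0 u N%:R.
  by move=> N; case: (R0_total u N%:R) => // h; exfalso; apply: hn; exists N.
have [p [_ hp]] : exists p : {poly nat}, ge (evalN p u * y) 1 /\ ge (evalN p u) y.
  by case: pu => _; apply; exact: y_neq0.
set K := size p; set C := (\sum_(i < K) cN p i)%N.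
set q := eps ^+ K.+2.
have q0 : 0 < q by rewrite exprn_gt0.
set N := Num.Def.archi_bound ((C%:R : rat) / q).
have hN : (C%:R : rat) <= q * N%:R.
  have hN0 : (0 : rat) <= C%:R / q by rewrite divr_ge0 ?ler0n ?ltW.
  have h := archi_boundP hN0; move: h.
  rewrite ltr_pdivrMr // mulrC; exact: ltW.
apply: (@badR0 K.+1).
apply: (Rtrans cR0 (geR0 (Raddl cge ge10 (S K.+1) x))).
apply: (Rtrans cR0 (geR0 (S_ge_T K.+1))).
rewrite /T (exprSr u) mulrA -/q.
apply: (Rtrans cR0 (RmulL cR0 _ (hu N))).
rewrite mulrAC -(ratF_nat invP ch0) -(ratFM invP ch0) ?ler0n ?ltW //.
apply: geR0; apply: (Rtrans cge (y := C%:R * u ^+ K)); last first.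
  by apply: (Rtrans cge (evalN_bound p) hp).
apply: (RmulR cge); rewrite -(ratF_nat invP ch0); apply: ratF_mono => //.
Qed.

Lemma bound_all a : exists n : nat, R0 n%:R a.
Proof.
case: (eqVneq a 0) => [->|a0]; first by exists 0%N; exact: (Rrefl cR0).
have [p [_ hp]] : exists p : {poly nat}, ge (evalN p u * a) 1 /\ ge (evalN p u) a.
  by case: pu => _; apply.
have [N hN] := u_bounded.
set K := size p; set C := (\sum_(i < K) cN p i)%N.
exists (C * N ^ K)%N; rewrite natrM natrX.
apply: (Rtrans cR0 (RmulL cR0 _ (RX K cR0 hN))).
apply: geR0; exact: (Rtrans cge (evalN_bound p) hp).
Qed.

Lemma rat_cons q r : 0 <= q -> 0 <= r -> R0 (ratF inv q) (ratF inv r) -> r <= q.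
Proof.
move=> q0 r0 h; case: (lerP r q) => // qr; exfalso.
set dl := r - q.
have dl0 : 0 < dl by rewrite subr_gt0.
set q' := q + 1.
have q'0 : 0 < q' by rewrite /q' ltr_wpDl.
have q'0' : 0 <= q' := ltW q'0.
have dl0' : 0 <= dl := ltW dl0.
have e0' : 0 <= eps := ltW eps0.
have h0 : R0 (ratF inv q') (ratF inv (q' + dl)).
  have := RaddR cR0 1 h.
  rewrite -(ratF1 invP ch0) -!(ratFD invP ch0) //.
  have E : q' + dl = r + 1 by rewrite /q' /dl; ring.
  by rewrite E.
have iter : forall k : nat, R0 (ratF inv q') (ratF inv (q' + k%:R * dl)).
  elim=> [|k IH]; first by rewrite mul0r addr0; exact: (Rrefl cR0).
  apply: (Rtrans cR0 IH).
  have := RaddR cR0 (ratF inv (k%:R * dl)) h0.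
  have kdl0 : 0 <= k%:R * dl by apply: mulr_ge0 => //; exact: ler0n.
  rewrite -(ratFD invP ch0 q'0' kdl0) -(ratFD invP ch0 (addr_ge0 q'0' dl0') kdl0).
  have E : q' + dl + k%:R * dl = q' + k.+1%:R * dl by rewrite -natr1; ring.
  by rewrite E.
have [n hn] := bound_all y.
set kk := Num.Def.archi_bound ((n%:R : rat) * q' / (eps * dl)).
have hk : (n%:R : rat) * q' / (eps * dl) < kk%:R.
  by apply: archi_boundP; rewrite divr_ge0 ?mulr_ge0 ?ler0n ?ltW.
have hk2 : (n%:R : rat) <= (q' + kk%:R * dl) * (eps / q').
  move: hk; rewrite ltr_pdivrMr ?mulr_gt0 //; move=> hk.
  have e : (q' + kk%:R * dl) * (eps / q') = eps + kk%:R * (eps * dl) / q'.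
    by field; rewrite gt_eqF.
  rewrite e; apply: (@le_trans _ _ (kk%:R * (eps * dl) / q')); last first.
    by rewrite lerDr ltW.
  by rewrite ler_pdivlMr // ltW.
have := RmulR cR0 (ratF inv (eps / q')) (iter kk).
have hed : 0 <= eps / q' by apply: divr_ge0.
have qk0 : 0 <= q' + kk%:R * dl.
  by apply: addr_ge0 => //; apply: mulr_ge0 => //; exact: ler0n.
rewrite -(ratFM invP ch0 q'0' hed) -(ratFM invP ch0 qk0 hed).
rewrite mulrC divfK ?gt_eqF // => h2.
apply: (@badR0 0%N).
apply: (Rtrans cR0 (geR0 (Raddl cge ge10 _ x))).
apply: (Rtrans cR0 (geR0 (S_ge_eps 0))).
apply: (Rtrans cR0 h2); apply: (Rtrans cR0 _ hn); apply: geR0.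
rewrite -(ratF_nat invP ch0); apply: ratF_mono => //; exact: ler0n.
Qed.

Variable RR : realType.

Definition fset (a : F) : set RR :=
  fun z => exists2 q : rat, (0 <= q /\ R0 a (ratF inv q)) & z = ratr q.
Definition fR (a : F) : RR := sup (fset a).

Lemma fset0 a : fset a 0.
Proof.
exists 0; last by rewrite rmorph0.
by split => //; rewrite (ratF0 invP ch0); apply: geR0; exact: (Rge0 cge ge10).
Qed.

Lemma fset_has_sup a : has_sup (fset a).
Proof.
split; first by exists 0; exact: fset0.
have [n hn] := bound_all a.
exists n%:R => z [q [q0 hq] ->].
rewrite -(ratr_nat RR) ler_rat; apply: rat_cons => //; try exact: ler0n.
by rewrite (ratF_nat invP ch0); apply: (Rtrans cR0 hn hq).
Qed.

Lemma L1 a q : 0 <= q -> R0 a (ratF inv q) -> ratr q <= fR a.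
Proof.
by move=> q0 h; apply: (sup_upper_bound (fset_has_sup a)); exists q.
Qed.

Lemma L4 a q : 0 <= q -> R0 (ratF inv q) a -> fR a <= ratr q.
Proof.
move=> q0 h; apply: ge_sup; first by exists 0; exact: fset0.
move=> z [q' [q'0 hq'] ->]; rewrite ler_rat; apply: rat_cons => //.
exact: (Rtrans cR0 h hq').
Qed.

Lemma fR_ge0 a : 0 <= fR a.
Proof.
have := @L1 a 0 (lexx 0); rewrite rmorph0; apply.
by rewrite (ratF0 invP ch0); apply: geR0; exact: (Rge0 cge ge10).
Qed.

Lemma lower_approx a (eta : RR) : 0 < eta ->
  exists q, [/\ 0 <= q, R0 a (ratF inv q) & fR a - eta < ratr q].
Proof.
move=> eta0; have [z [q [q0 hq] ->] hz] := sup_adherent eta0 (fset_has_sup a).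
by exists q.
Qed.

Lemma upper_approx a (eta : RR) : 0 < eta ->
  exists q, [/\ 0 <= q, R0 (ratF inv q) a & ratr q < fR a + eta].
Proof.
move=> eta0.
have : fR a < fR a + eta by rewrite ltrDl.
move=> /rat_in_itvoo [q]; rewrite in_itv /= => /andP [h1 h2].
have q0 : 0 <= q by rewrite -(ler0q RR); apply: le_trans (fR_ge0 a) (ltW h1).
exists q; split => //.
case: (R0_total (ratF inv q) a) => // h; exfalso.
by have := L1 q0 h; rewrite leNgt h1.
Qed.

Lemma fR_ratF q : 0 <= q -> fR (ratF inv q) = ratr q.
Proof.
move=> q0; apply/le_anti/andP; split.
  by apply: L4 => //; exact: (Rrefl cR0).
by apply: L1 => //; exact: (Rrefl cR0).
Qed.

Lemma fR_mono a b : R0 a b -> fR b <= fR a.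
Proof.
move=> hab; case: (lerP (fR b) (fR a)) => // hlt; exfalso.
have hd : 0 < fR b - fR a by rewrite subr_gt0.
have [q [q0 hq hq2]] := upper_approx a hd.
have := L4 q0 (Rtrans cR0 hq hab).
by rewrite addrC subrK in hq2; rewrite leNgt hq2.
Qed.

Lemma fR_add a b : fR (a + b) = fR a + fR b.
Proof.
apply/le_anti/andP; split.
- apply/ler_addgt0Pr => e e0.
  have e2 : 0 < e / 2 by rewrite divr_gt0.
  have [q1 [q10 h1 h1']] := upper_approx a e2.
  have [q2 [q20 h2 h2']] := upper_approx b e2.
  have hab : R0 (ratF inv (q1 + q2)) (a + b).
    by rewrite (ratFD invP ch0 q10 q20); exact: (Radd2 cR0 h1 h2).
  have := L4 (addr_ge0 q10 q20) hab; rewrite rmorphD => h.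
  lra.
- apply/ler_addgt0Pr => e e0.
  have e2 : 0 < e / 2 by rewrite divr_gt0.
  have [q1 [q10 h1 h1']] := lower_approx a e2.
  have [q2 [q20 h2 h2']] := lower_approx b e2.
  have hab : R0 (a + b) (ratF inv (q1 + q2)).
    by rewrite (ratFD invP ch0 q10 q20); exact: (Radd2 cR0 h1 h2).
  have := L1 (addr_ge0 q10 q20) hab; rewrite rmorphD => h.
  lra.
Qed.

Lemma fR_mul a b : fR (a * b) = fR a * fR b.
Proof.
set A := fR a; set B := fR b.
have hA0 : 0 <= A := fR_ge0 a.
have hB0 : 0 <= B := fR_ge0 b.
have K0 : 0 < A + B + 1 by lra.
apply/le_anti/andP; split.
- apply/ler_addgt0Pr => e e0.
  set h := Num.min 1 (e / (A + B + 1)).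
  have h0 : 0 < h by rewrite lt_min ltr01 divr_gt0.
  have h1 : h <= 1 by rewrite ge_min lexx.
  have h2 : h <= e / (A + B + 1) by rewrite ge_min lexx orbT.
  have t2 : h * (A + B + 1) <= e by rewrite -ler_pdivlMr.
  have [q1 [q10 k1 k1']] := upper_approx a h0.
  have [q2 [q20 k2 k2']] := upper_approx b h0.
  have hab : R0 (ratF inv (q1 * q2)) (a * b).
    by rewrite (ratFM invP ch0 q10 q20); exact: (Rmul2 cR0 k1 k2).
  have := L4 (mulr_ge0 q10 q20) hab; rewrite rmorphM => hh.
  have r10 : 0 <= (ratr q1 : RR) by rewrite ler0q.
  have r20 : 0 <= (ratr q2 : RR) by rewrite ler0q.
  have t1 : (ratr q1 : RR) * ratr q2 <= (A + h) * (B + h).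
    by apply: ler_pM => //; apply: ltW.
  have t3 : h * h <= h * 1 by apply: ler_wpM2l => //; exact: ltW.
  nra.
- apply/ler_addgt0Pr => e e0.
  set h := e / (A + B + 1).
  have h0 : 0 < h by rewrite divr_gt0.
  have t4 : h * (A + B + 1) = e by rewrite /h divfK // gt_eqF.
  have [q1 [q10 k1 k1']] := lower_approx a h0.
  have [q2 [q20 k2 k2']] := lower_approx b h0.
  rewrite -/A in k1'; rewrite -/B in k2'.
  have hab : R0 (a * b) (ratF inv (q1 * q2)).
    by rewrite (ratFM invP ch0 q10 q20); exact: (Rmul2 cR0 k1 k2).
  have := L1 (mulr_ge0 q10 q20) hab; rewrite rmorphM => hh.
  have r10 : 0 <= (ratr q1 : RR) by rewrite ler0q.
  have r20 : 0 <= (ratr q2 : RR) by rewrite ler0q.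
  have l1 : (ratr q1 : RR) <= A := L1 q10 k1.
  have l2 : (ratr q2 : RR) <= B := L1 q20 k2.
  have t1 : A * (B - ratr q2) <= A * h by apply: ler_wpM2l => //; lra.
  have t2 : (ratr q2 : RR) * (A - ratr q1) <= ratr q2 * h.
    by apply: ler_wpM2l => //; lra.
  have t3 : (ratr q2 : RR) * h <= B * h by apply: ler_wpM2r => //; exact: ltW.
  nra.
Qed.

Lemma fR_hom : monotone_hom ge fR.
Proof.
split; first exact: fR_ge0.
split.
- by rewrite -(ratF0 invP ch0) fR_ratF // rmorph0.
- by rewrite -(ratF1 invP ch0) fR_ratF // rmorph1.
- exact: fR_add.
- exact: fR_mul.
- by move=> a b h; apply: fR_mono; apply: geR0.
Qed.

Lemma fR_sep : fR x < fR y.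
Proof.
have h : R0 y (x + S 0).
  by case: (R0_total (x + S 0) y) => // h; exfalso; exact: (badR0 h).
have h1 : fR x + fR (S 0) <= fR y by rewrite -fR_add; exact: fR_mono h.
have h2 : ratr eps <= fR (S 0).
  by rewrite -(fR_ratF (ltW eps0)); apply: fR_mono; apply: geR0; exact: S_ge_eps.
have h3 : (0 : RR) < ratr eps by rewrite ltr0q.
lra.
Qed.

Lemma final_contra : (forall f : F -> RR, monotone_hom ge f -> f y <= f x) -> False.
Proof. by move=> H; have := H fR fR_hom; rewrite leNgt fR_sep. Qed.

End Hard.

Lemma map_horner (A B : nzSemiRingType) (g : A -> B) (p : {poly A}) (z : B) n :
  g 0 = 0 -> (size p <= n)%N -> (map_poly g p).[z] = \sum_(i < n) g p`_i * z ^+ i.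
Proof.
move=> g0 hn; rewrite (@horner_coef_wide _ n).
  by apply: eq_bigr => i _; rewrite coef_map_id0.
exact: leq_trans (size_poly _ _) hn.
Qed.

Lemma hard_dir (RR : realType) (F : comNzSemiRingType) (inv : F -> F)
    (ge : F -> F -> Prop) (u : F) :
  preordered_semifield inv ge -> char_zero F -> ge 1 0 ->
  poly_universal ge u -> forall x y : F,
  (forall f : F -> RR, monotone_hom ge f -> f y <= f x) ->
  forall eps : rat, 0 < eps -> exists m : nat,
    ge (x + \sum_(j < m.+1) ratF inv (eps ^+ j.+1) * u ^+ j) y.
Proof.
move=> psf ch0 ge10 pu x y H eps eps0.
case: (classic (exists m, ge (x + S inv u eps m) y)) => [[m hm]|hn].
  by exists m.
exfalso.
have bad : forall m, ~ ge (x + S inv u eps m) y by move=> m hm; apply: hn; exists m.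
have [A0 [gA0 maxA0]] := Zorn_bigcup (good_chain psf bad).
exact: (final_contra psf ch0 ge10 pu eps0 bad gA0 maxA0 H).
Qed.

Lemma geom_bound (RR : realType) (t : RR) n : 0 <= t -> t <= 2^-1 ->
  \sum_(j < n) t ^+ j <= 2.
Proof.
move=> t0 t1; elim: n => [|n IH]; first by rewrite big_ord0 ler0n.
rewrite big_ord_recl expr0.
have -> : \sum_(i < n) t ^+ (bump 0 i) = t * \sum_(i < n) t ^+ i.
  by rewrite mulr_sumr; apply: eq_bigr => i _; rewrite /bump /= add1n exprS.
have h : t * \sum_(i < n) t ^+ i <= 2^-1 * 2.
  apply: ler_pM => //; apply: sumr_ge0 => i _; exact: exprn_ge0.
move: h; rewrite mulVf ?pnatr_eq0 // => h.
lra.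
Qed.

Lemma small_rat (RR : realType) (d : RR) : 0 < d -> exists e : rat, 0 < e /\ ratr e < d.
Proof.
move=> d0; have [e] := rat_in_itvoo d0; rewrite in_itv /= => /andP [h1 h2].
by exists e; split => //; rewrite -(ltr0q RR).
Qed.

Lemma series_bound (RR : realType) (e : rat) (r : RR) m :
  0 < e -> 0 <= r -> ratr e * (2 * (r + 1)) <= 1 ->
  \sum_(j < m.+1) ratr (e ^+ j.+1) * r ^+ j <= 2 * ratr e.
Proof.
move=> e0 r0 h.
have e0' : (0 : RR) < ratr e by rewrite ltr0q.
have -> : \sum_(j < m.+1) ratr (e ^+ j.+1) * r ^+ j =
          ratr e * \sum_(j < m.+1) (ratr e * r) ^+ j.
  rewrite mulr_sumr; apply: eq_bigr => j _.
  by rewrite rmorphXn exprS [in RHS]exprMn mulrA.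
rewrite mulrC; apply: ler_wpM2r; first exact: ltW.
apply: geom_bound; first by apply: mulr_ge0 => //; exact: ltW.
have h2 : ratr e * r <= ratr e * (r + 1) by apply: ler_wpM2l; [exact: ltW | lra].
have h3 : (ratr e : RR) * (r + 1) <= 2^-1.
  rewrite -[X in _ <= X]mul1r ler_pdivlMr ?ltr0n //.
  by apply: le_trans h; rewrite mulrCA mulrC.
exact: le_trans h2 h3.
Qed.

Lemma choose_e (RR : realType) (r d : RR) : 0 <= r -> 0 < d ->
  exists e : rat, [/\ 0 < e, ratr e * (2 * (r + 1)) <= 1 & 2 * ratr e <= d].
Proof.
move=> r0 d0.
have k0 : (0 : RR) < Num.min (d / 2) ((2 * (r + 1))^-1).
  by rewrite lt_min divr_gt0 // invr_gt0; lra.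
have [e [e0 he]] := small_rat k0.
exists e; split => //.
- have : (ratr e : RR) <= (2 * (r + 1))^-1.
    by apply: le_trans (ltW he) _; rewrite ge_min lexx orbT.
  move=> h; have p0 : (0 : RR) < 2 * (r + 1) by lra.
  by have := ler_wpM2r (ltW p0) h; rewrite mulVf ?gt_eqF.
- have : (ratr e : RR) <= d / 2 by apply: le_trans (ltW he) _; rewrite ge_min lexx.
  lra.
Qed.

Lemma map_hornerD (A B : nzSemiRingType) (g : A -> B) (p q : {poly A}) (z : B) :
  g 0 = 0 -> (forall i, g (p`_i + q`_i) = g p`_i + g q`_i) ->
  (map_poly g (p + q)).[z] = (map_poly g p).[z] + (map_poly g q).[z].
Proof.
move=> g0 gD; set n := maxn (size p) (size q).
rewrite (@map_horner _ _ g (p + q) z n) //; last exact: size_polyD.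
rewrite (@map_horner _ _ g p z n) //; last exact: leq_maxl.
rewrite (@map_horner _ _ g q z n) //; last exact: leq_maxr.
rewrite -big_split; apply: eq_bigr => i _.
by rewrite coefD gD mulrDl.
Qed.

Lemma map_horner1 (A B : nzSemiRingType) (g : A -> B) (z : B) :
  g 0 = 0 -> g 1 = 1 -> (map_poly g 1).[z] = 1.
Proof.
move=> g0 g1; rewrite (@map_horner _ _ g _ z 1) //; last by rewrite size_poly1.
by rewrite big_ord1 coef1 /= g1 mul1r.
Qed.

Section Dirs.
Variables (RR : realType) (F : comNzSemiRingType) (inv : F -> F)
    (ge : F -> F -> Prop) (u : F).
Hypotheses (psf : preordered_semifield inv ge) (ch0 : char_zero F) (ge10 : ge 1 0)
  (pu : poly_universal ge u).
Variables (x y : F).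

Let invP : forall a : F, a != 0 -> a * inv a = 1.
Proof. by case: psf. Qed.
Let cge : compat ge := compat_ge psf.

Lemma dir21 :
  (forall eps : rat, 0 < eps -> exists m : nat,
     ge (x + \sum_(j < m.+1) ratF inv (eps ^+ j.+1) * u ^+ j) y) ->
  forall f : F -> RR, monotone_hom ge f -> f y <= f x.
Proof.
move=> H f hf; apply/ler_addgt0Pr => d d0.
have r0 := fge0 hf u.
have [e [e0 h1 h2]] := choose_e r0 d0.
have [m hm] := H e e0.
have := fmono hf hm; rewrite (fD hf) (fsum hf).
under eq_bigr => j _ do rewrite (fM hf) (fX hf) (fratF invP ch0 hf (exprn_ge0 _ (ltW e0))).
have := series_bound m e0 r0 h1.
lra.
Qed.

Lemma dir31 :
  (forall (r : RR) (eps : rat), 0 <= r -> 0 < eps ->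
     exists p : {poly rat}, nonneg_poly p /\
       evalR p r <= ratr eps /\ ge (x + evalQ inv p u) y) ->
  forall f : F -> RR, monotone_hom ge f -> f y <= f x.
Proof.
move=> H f hf; apply/ler_addgt0Pr => d d0.
have [e [e0 he]] := small_rat d0.
have [p [pn [hp1 hp2]]] := H (f u) e (fge0 hf u) e0.
have := fmono hf hp2; rewrite (fD hf) (fevalQ invP ch0 hf _ pn).
lra.
Qed.

Lemma dir41 :
  (forall (r : RR) (eps : rat), 0 <= r -> 0 < eps ->
     exists p : {poly rat}, nonneg_poly p /\
       evalR p r <= 1 + ratr eps /\ ge (evalQ inv p u * x) y) ->
  forall f : F -> RR, monotone_hom ge f -> f y <= f x.
Proof.
move=> H f hf; apply/ler_addgt0Pr => d d0.
have fx0 := fge0 hf x.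
have k0 : 0 < d / (f x + 1) by rewrite divr_gt0 //; lra.
have [e [e0 he]] := small_rat k0.
have [p [pn [hp1 hp2]]] := H (f u) e (fge0 hf u) e0.
have := fmono hf hp2; rewrite (fM hf) (fevalQ invP ch0 hf _ pn) => h.
have t : evalR p (f u) * f x <= (1 + ratr e) * f x by apply: ler_wpM2r.
have he' : ratr e * (f x + 1) < d by rewrite -ltr_pdivlMr //; lra.
have e0' : (0 : RR) <= ratr e by rewrite ler0q ltW.
nra.
Qed.

Lemma dir13 :
  (forall f : F -> RR, monotone_hom ge f -> f y <= f x) ->
  forall (r : RR) (eps : rat), 0 <= r -> 0 < eps ->
     exists p : {poly rat}, nonneg_poly p /\
       evalR p r <= ratr eps /\ ge (x + evalQ inv p u) y.
Proof.
move=> H r eps r0 eps0.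
have eps0' : (0 : RR) < ratr eps by rewrite ltr0q.
have [e [e0 h1 h2]] := choose_e r0 eps0'.
have [m hm] := hard_dir psf ch0 ge10 pu H e0.
exists (\poly_(j < m.+1) e ^+ j.+1); split; last split.
- move=> i; rewrite coef_poly; case: ifP => _; last exact: lexx.
  exact: exprn_ge0 (ltW e0).
- rewrite /evalR (@map_horner _ _ _ _ r m.+1) ?rmorph0 ?size_poly //.
  under eq_bigr => i _ do rewrite coef_poly ltn_ord.
  exact: le_trans (series_bound m e0 r0 h1) h2.
- rewrite /evalQ (@map_horner _ _ _ _ u m.+1) ?(ratF0 invP ch0) ?size_poly //.
  under eq_bigr => i _ do rewrite coef_poly ltn_ord.
  exact: hm.
Qed.

End Dirs.

Section Dirs2.
Variables (RR : realType) (F : comNzSemiRingType) (inv : F -> F)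
    (ge : F -> F -> Prop) (u : F).
Hypotheses (psf : preordered_semifield inv ge) (ch0 : char_zero F) (ge10 : ge 1 0)
  (pu : poly_universal ge u).
Variables (x y : F).

Let invP : forall a : F, a != 0 -> a * inv a = 1.
Proof. by case: psf. Qed.
Let cge : compat ge := compat_ge psf.

Lemma dir14 : x != 0 ->
  (forall f : F -> RR, monotone_hom ge f -> f y <= f x) ->
  forall (r : RR) (eps : rat), 0 <= r -> 0 < eps ->
     exists p : {poly rat}, nonneg_poly p /\
       evalR p r <= 1 + ratr eps /\ ge (evalQ inv p u * x) y.
Proof.
move=> x0 H r eps r0 eps0.
have H' : forall f : F -> RR, monotone_hom ge f -> f (y * inv x) <= f 1.
  move=> f hf; rewrite (fM hf) (finv invP hf x0) (f1 hf).
  have fx0 : 0 < f x.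
    rewrite lt_def (fge0 hf) andbT; apply/eqP => e.
    have := f1 hf; rewrite -(invP x0) (fM hf) e mul0r => /eqP; rewrite eq_sym oner_eq0.
    by [].
  by rewrite ler_pdivrMr // mul1r; exact: H.
have [p [pn [hp1 hp2]]] := dir13 psf ch0 ge10 pu H' r0 eps0.
have pn1 : nonneg_poly (1 + p).
  by move=> i; rewrite coefD coef1; apply: addr_ge0 => //; exact: ler0n.
exists (1 + p); split => //; split.
- rewrite /evalR map_hornerD ?rmorph0 //; last by move=> i; rewrite rmorphD.
  by rewrite map_horner1 ?rmorph0 ?rmorph1 // lerD2l.
- rewrite /evalQ map_hornerD ?(ratF0 invP ch0) //; last first.
    move=> i; apply: (ratFD invP ch0) => //.
    by rewrite coef1; exact: ler0n.
  rewrite map_horner1 ?(ratF0 invP ch0) ?(ratF1 invP ch0) //.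
  have := RmulR cge x hp2.
  by rewrite -mulrA (mulrC (inv x)) invP // mulr1.
Qed.

End Dirs2.

Theorem theorem3p1 (R : realType) (F : comNzSemiRingType) (inv : F -> F)
    (ge : F -> F -> Prop) (u : F) :
  preordered_semifield inv ge -> char_zero F -> ge 1 0 ->
  poly_universal ge u ->
  forall x y : F, x != 0 -> y != 0 ->
  [/\ ((forall f : F -> R, monotone_hom ge f -> f y <= f x) <->
       (forall eps : rat, 0 < eps -> exists m : nat,
          ge (x + \sum_(j < m.+1) ratF inv (eps ^+ j.+1) * u ^+ j) y)),
      ((forall f : F -> R, monotone_hom ge f -> f y <= f x) <->
       (forall (r : R) (eps : rat), 0 <= r -> 0 < eps ->
          exists p : {poly rat}, nonneg_poly p /\
            evalR p r <= ratr eps /\ ge (x + evalQ inv p u) y)) &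
      ((forall f : F -> R, monotone_hom ge f -> f y <= f x) <->
       (forall (r : R) (eps : rat), 0 <= r -> 0 < eps ->
          exists p : {poly rat}, nonneg_poly p /\
            evalR p r <= 1 + ratr eps /\ ge (evalQ inv p u * x) y))].
Proof.
move=> psf ch0 ge10 pu x y x0 y0.
split; split.
- by move=> H; exact: (hard_dir psf ch0 ge10 pu H).
- exact: (dir21 psf ch0).
- exact: (dir13 psf ch0 ge10 pu).
- exact: (dir31 psf ch0).
- exact: (dir14 psf ch0 ge10 pu x0).
- exact: (dir41 psf ch0).
Qed.
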